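(* Let $k\ge 1$ and $n\ge 3$ be integers, let $\alpha<0$ be a real number, and let $G\in T_k(n)$. Then \[{}^0R_{\alpha}(G)\ge k(n-1)^{\alpha}+2(k+1)^{\alpha}+(n-k-2)(k+2)^{\alpha},\] and equality holds if and only if $G=K_k+P_{n-k}$.
   Context: All graphs are finite, simple, undirected and connected. For a graph $G$ and real $\alpha\neq 0$, the zeroth-order general Randić index is ${}^0R_{\alpha}(G)=\sum_{v\in V(G)}d(v)^{\alpha}$, where $d(v)$ is the degree of $v$. A connected graph $G$ is a $k$-generalized quasi tree if there is a subset $V_k\subset V(G)$ with $|V_k|=k$ such that $G-V_k$ is a tree, but for every subset $V_{k-1}\subset V(G)$ with $|V_{k-1}|=k-1$, $G-V_{k-1}$ is not a tree; the vertices of such a $V_k$ are called quasi vertices. $T_k(n)$ denotes the class of $k$-generalized quasi trees of order $n$. For vertex-disjoint graphs $G,H$, the join $G+H$ has vertex set $V(G)\cup V(H)$ and edge set $E(G)\cup E(H)\cup\{uv: u\in V(G), v\in V(H)\}$. $K_k$ is the complete graph on $k$ vertices and $P_m$ is the path on $m$ vertices. *)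

(* Defs.v *)
From HB Require Import structures.
From mathcomp Require Import all_boot all_order all_algebra.
From mathcomp Require Import all_classical all_reals all_analysis.
Set Implicit Arguments. Unset Strict Implicit. Unset Printing Implicit Defensive.
Import Order.TTheory GRing.Theory Num.Theory.

Definition simple_graph (T : finType) (e : rel T) : Prop :=
  symmetric e /\ irreflexive e.

Definition connected_graph (T : finType) (e : rel T) : Prop :=
  forall x y : T, connect e x y.

Definition deg (T : finType) (e : rel T) (v : T) : nat := #|[pred y | e v y]|.

Definition randic0 (R : realType) (T : finType) (e : rel T) (alpha : R) : R :=
  (\sum_(v : T) ((deg e v)%:R `^ alpha))%R.

Definition induced (T : finType) (e : rel T) (S : {set T}) : rel T :=
  [rel x y | [&& x \in S, y \in S & e x y]].

Definition has_cycle (T : finType) (e : rel T) (S : {set T}) : Prop :=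
  exists s : seq T, [/\ all (mem S) s, uniq s, 2 < size s & cycle e s].

Definition is_tree_on (T : finType) (e : rel T) (S : {set T}) : Prop :=
  [/\ (0 < #|S|)%N,
      (forall x y, x \in S -> y \in S -> connect (induced e S) x y)
    & ~ has_cycle e S].

Definition tree_after_removal (T : finType) (e : rel T) (V : {set T}) : Prop :=
  is_tree_on e (~: V).

Definition gen_quasi_tree (T : finType) (e : rel T) (k : nat) : Prop :=
  connected_graph e /\
  (exists V : {set T}, #|V| = k /\ tree_after_removal e V) /\
  (forall W : {set T}, #|W| = k.-1 -> ~ tree_after_removal e W).

Definition complete_graph (k : nat) : rel 'I_k := fun i j => i != j.
Definition path_graph (m : nat) : rel 'I_m :=
  fun i j => (i.+1 == j :> nat) || (j.+1 == i :> nat).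

Definition graph_join (T1 T2 : finType) (e1 : rel T1) (e2 : rel T2) :
    rel (T1 + T2)%type :=
  fun u v => match u, v with
             | inl a, inl b => e1 a b
             | inr a, inr b => e2 a b
             | _, _ => true
             end.

Definition isomorphic (T1 T2 : finType) (e1 : rel T1) (e2 : rel T2) : Prop :=
  exists f : T1 -> T2, bijective f /\ forall x y, e1 x y = e2 (f x) (f y).
Arguments complete_graph : clear implicits.
Arguments path_graph : clear implicits.

(* Main.v *)
Require Import Defs.
From HB Require Import structures.
From mathcomp Require Import all_boot all_order all_algebra.
From mathcomp Require Import all_classical all_reals all_analysis.
Import Order.TTheory GRing.Theory Num.Theory.
From mathcomp Require Import ring lra zify.

Section A.
Local Open Scope ring_scope.
Variable R : realType.
Variable alpha : R.
Hypothesis an : alpha < 0.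
Definition f (d : nat) : R := d%:R `^ alpha.
Lemma f_gt0 d : (0 < d)%N -> 0 < f d.
Proof. by move=> h; rewrite /f powR_gt0 // ltr0n. Qed.
Lemma f_ltR (x y : R) : 0 < x -> x < y -> y `^ alpha < x `^ alpha.
Proof.
move=> x0 xy; rewrite /powR !gt_eqF //; last by apply: lt_trans xy.
by rewrite ltr_expR ltr_nM2l // ltr_ln // posrE //; apply: lt_trans xy.
Qed.
Lemma f_lt a b : (0 < a)%N -> (a < b)%N -> f b < f a.
Proof. by move=> a0 ab; apply: f_ltR; rewrite ?ltr0n ?ltr_nat. Qed.
Lemma f_le a b : (0 < a)%N -> (a <= b)%N -> f b <= f a.
Proof. move=> a0; rewrite leq_eqVlt => /orP[/eqP->//|ab]; exact/ltW/f_lt. Qed.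
Lemma f_conv x : (0 < x)%N -> 2 * f x.+1 < f x + f x.+2.
Proof.
move=> x0.
have hab : f x * f x.+2 = (x * x.+2)%N%:R `^ alpha by rewrite /f natrM powRM.
have hc : f x.+1 * f x.+1 = (x.+1 * x.+1)%N%:R `^ alpha by rewrite /f natrM powRM.
have : f x.+1 * f x.+1 < f x * f x.+2.
  rewrite hab hc; apply: f_ltR; rewrite ?ltr0n ?ltr_nat; lia.
have := @f_gt0 x x0; have : (0 < f x.+2) by apply: f_gt0.
have : (0 < f x.+1) by apply: f_gt0.
move=> h1 h2 h3 h4.
set a := f x in h3 h4 *; set b := f x.+2 in h2 h4 *; set c := f x.+1 in h1 h4 *.
have h5 : 4 * (c * c) < (a + b) * (a + b).
  have h7 : 0 <= (a - b) * (a - b) by rewrite -expr2 sqr_ge0.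
  have -> : (a + b) * (a + b) = (a - b) * (a - b) + 4 * (a * b) by ring.
  lra.
rewrite ltNge; apply/negP => h6.
have : (a + b) * (a + b) <= (2 * c) * (2 * c) by apply: ler_pM => //; lra.
nra.
Qed.
Variable k : nat.
Hypothesis k1 : (1 <= k)%N.
Let g d := f (k + d).
Lemma slope d : (1 <= d)%N -> g 2 - g 1 <= g d.+1 - g d /\ ((2 <= d)%N -> g 2 - g 1 < g d.+1 - g d).
Proof.
elim: d => // -[|d] IH _; first by split => //; lra.
have [IH1 _] := IH isT.
have hc := @f_conv (k + d.+1) ltac:(lia).
have e1 : (k + d.+1).+1 = k + d.+2 by lia.
have e2 : (k + d.+1).+2 = k + d.+3 by lia.
rewrite e2 e1 in hc; rewrite /g in IH1 *.
split => [|_]; lra.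
Qed.
Lemma lb d : g 2 + (d%:R - 2) * (g 2 - g 1) <= g d /\ (d != 1%N -> d != 2%N -> g 2 + (d%:R - 2) * (g 2 - g 1) < g d).
Proof.
case: d => [|d].
  have hc := @f_conv k ltac:(lia).
  rewrite /g addn0 addn1 addn2; split => [|_ _]; lra.
case: d => [|d]; first by split => //; lra.
elim: d => [|d [IH1 IH2]]; first by split => //; lra.
have [s1 s2] := @slope d.+2 isT.
have s3 := s2 isT.
rewrite /g in s1 s3 IH1 IH2 *; rewrite !mulrS in IH1 IH2 *.
split => [|_ _]; first by lra.
lra.
Qed.
End A.


Section Graph.
Variable T : finType.
Variable e : rel T.
Hypothesis esym : symmetric e.
Hypothesis eirr : irreflexive e.

Definition fullT : {set T} := finset (fun _ => true).

Definition nb (A : {set T}) v := (\sum_(y in A) (e v y : nat))%N.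

Lemma nb_card A v : nb A v = #|[set y in A | e v y]|.
Proof.
rewrite /nb -sum1_card big_mkcond /= [RHS]big_mkcond /=.
apply: eq_bigr => y _; rewrite inE.
by case: (y \in A); case: (e v y).
Qed.

Lemma nb_le A v : nb A v <= #|A|.
Proof. by rewrite nb_card subset_leq_card // subsetE; apply/pred0P => y; rewrite !inE; case: (y \in A). Qed.

Lemma nb_full A v : nb A v = #|A| -> forall y, y \in A -> e v y.
Proof.
move=> h y yA; apply/negPn/negP => ne.
have : nb A v = nb (A :\ y) v by rewrite /nb (big_setD1 _ yA) /= (negbTE ne).
rewrite h => h2; have := nb_le (A :\ y) v; rewrite -h2 (cardsD1 y A) yA; lia.
Qed.

Lemma chord (S : {set T}) (s : seq T) (x0 : T) (i j : nat) : uniq s -> all (mem S) s -> sorted e s ->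
  ~ has_cycle e S -> (i.+1 < j)%N -> (j < size s)%N ->
  ~~ e (nth x0 s i) (nth x0 s j).
Proof.
move=> us as_ ss nc hij hj; apply/negP => E; apply: nc.
set c := take (j - i).+1 (drop i s).
have sc : size c = (j - i).+1 by rewrite size_takel // size_drop; lia.
have nc' t : (t < (j - i).+1)%N -> nth x0 c t = nth x0 s (i + t).
  by move=> ht; rewrite nth_take // nth_drop.
exists c; split.
- apply/allP => y /mem_take /mem_drop ys; exact: (allP as_).
- by rewrite take_uniq // drop_uniq.
- rewrite sc; lia.
- case Ec: c => [|y p]; first by rewrite Ec in sc.
  rewrite (cycle_path x0) /=.
  have hy : y = nth x0 s i by rewrite -(addn0 i) -nc' // Ec.
  have hl : last y p = nth x0 s j.
    have sp : size p = (j - i)%N by move: sc; rewrite Ec /= => -[].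
    have -> : last y p = nth x0 c (j - i) by rewrite Ec (last_nth x0) sp.
    rewrite nc' //; congr nth; lia.
  rewrite hl hy esym E /=.
  have : sorted e c.
    apply/(sortedP x0) => t ht; rewrite !nc' -?sc //; last by lia.
    have := (sortedP x0 ss (i + t)); rewrite addnS; apply; lia.
  by rewrite Ec /= -hy.
Qed.

Definition spath (S : {set T}) (s : seq T) := [&& uniq s, all (mem S) s & sorted e s].

Lemma maxpath (S : {set T}) v : v \in S -> exists s, [/\ spath S s, (0 < size s)%N &
  forall s', spath S s' -> (size s' <= size s)%N].
Proof.
move=> vS.
pose P l := `[< exists s, spath S s && (size s == l) >].
have ex : exists l, P l.
  by exists 1%N; apply/asboolP; exists [:: v]; rewrite /spath /= vS.
have bnd : forall l, P l -> (l <= #|T|)%N.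
  move=> l /asboolP [s /andP[/and3P[us _ _] /eqP <-]].
  by rewrite -(card_uniqP us) max_card.
have [l /asboolP [s /andP[sp /eqP sl]] lmax] := ex_maxnP ex bnd.
exists s; split => //.
  rewrite sl; apply: (leq_trans _ (lmax 1%N _)) => //.
  by apply/asboolP; exists [:: v]; rewrite /spath /= vS.
by move=> s' sp'; rewrite sl; apply: lmax; apply/asboolP; exists s'; rewrite sp' eqxx.
Qed.

Lemma spath_rev (S : {set T}) s : spath S s -> spath S (rev s).
Proof.
case/and3P => us as_ ss; rewrite /spath rev_uniq us all_rev as_ /= rev_sorted.
by rewrite (eq_sorted (e' := e)) // => a b; rewrite esym.
Qed.

Lemma maxpath_head (S : {set T}) s (x0 : T) : spath S s -> (0 < size s)%N ->
  (forall s', spath S s' -> (size s' <= size s)%N) ->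
  forall w, w \in S -> e (nth x0 s 0) w -> w \in s.
Proof.
case: s => [//|x p] /and3P[us as_ ss] _ mx w wS ew.
apply/negPn/negP => wn.
have : spath S (w :: x :: p).
  rewrite /spath /= wS; move: us as_ ss wn => /= -> -> /= ->; rewrite esym ew.
  by move=> ->.
by move/mx; rewrite /= ltnn.
Qed.

Lemma maxpath_last (S : {set T}) s (x0 : T) : spath S s -> (0 < size s)%N ->
  (forall s', spath S s' -> (size s' <= size s)%N) ->
  forall w, w \in S -> e (nth x0 s (size s).-1) w -> w \in s.
Proof.
move=> sp s0 mx w wS ew.
rewrite -mem_rev; apply: (@maxpath_head S (rev s) x0 (@spath_rev S s sp)) => //.
- by rewrite size_rev.
- by move=> s' /mx; rewrite size_rev.
- rewrite nth_rev ?size_rev; last by lia.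
  by rewrite subn1.
Qed.

Lemma leaf (S : {set T}) : ~ has_cycle e S -> (0 < #|S|)%N ->
  exists2 v, v \in S & (nb S v <= 1)%N.
Proof.
move=> nc /card_gt0P [v0 v0S].
have [s [sp s0 mx]] := @maxpath S v0 v0S.
have sp' := sp; case/and3P: sp' => us as_ ss.
set x := nth v0 s 0.
have xS : x \in S by apply: (allP as_); rewrite mem_nth.
exists x => //.
rewrite leqNgt; apply/negP; rewrite nb_card => /card_gt1P [a [b [ha hb ab]]].
rewrite !inE in ha hb; case/andP: ha => aS exa; case/andP: hb => bS exb.
have ais : a \in s by apply: (@maxpath_head S s v0 sp s0 mx a aS exa).
have bis : b \in s by apply: (@maxpath_head S s v0 sp s0 mx b bS exb).
have na := nth_index v0 ais; have nb_ := nth_index v0 bis.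
have ia0 : index a s != 0%N.
  by apply/eqP => h; move: exa; rewrite -na h eirr.
have ib0 : index b s != 0%N.
  by apply/eqP => h; move: exb; rewrite -nb_ h eirr.
have iab : index a s != index b s.
  by apply/eqP => h; move: ab; rewrite -na h nb_ eqxx.
have [j [j2 js exj]] : exists j, [/\ (1 < j)%N, (j < size s)%N & e x (nth v0 s j)].
  case: (boolP (1 < index a s)%N) => h.
    by exists (index a s); rewrite na index_mem.
  by exists (index b s); rewrite nb_ index_mem; split => //; lia.
by move: (@chord S s v0 0 j us as_ ss nc j2 js); rewrite exj.
Qed.

Lemma nb_split (S : {set T}) v : v \in S ->
  (\sum_(u in S) nb S u = 2 * nb (S :\ v) v + \sum_(u in S :\ v) nb (S :\ v) u)%N.
Proof.
move=> vS.
rewrite (big_setD1 v vS) /=.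
have -> : nb S v = nb (S :\ v) v by rewrite /nb (big_setD1 v vS) /= eirr.
rewrite (eq_bigr (fun u => e u v + nb (S :\ v) u)%N); last first.
  by move=> u _; rewrite /nb (big_setD1 v vS).
rewrite big_split /=.
have -> : (\sum_(i in S :\ v) (e i v : nat))%N = nb (S :\ v) v.
  by apply: eq_bigr => u _; rewrite esym.
lia.
Qed.

Lemma forest (S : {set T}) : ~ has_cycle e S ->
  (\sum_(v in S) nb S v <= 2 * (#|S|.-1))%N.
Proof.
move Hc: #|S| => c; elim: c S Hc => [|c IH] S Hc nc.
  by rewrite (cards0_eq Hc) big_set0.
have : (0 < #|S|)%N by rewrite Hc.
case/(@leaf S nc) => v vS lv.
have nc' : ~ has_cycle e (S :\ v).
  move=> [s [as_ us ss cs]]; apply: nc; exists s; split => //.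
  by apply/allP => y /(allP as_); rewrite /= inE => /andP[].
have c' : #|S :\ v| = c by move: Hc; rewrite (cardsD1 v S) vS; lia.
have IH' := IH _ c' nc'.
rewrite (@nb_split S v vS).
have h1 : (nb (S :\ v) v <= 1)%N.
  by apply: leq_trans lv; rewrite /nb (big_setD1 v vS) /= eirr.
have h2 := nb_le (S :\ v) v; rewrite c' in h2.
move: IH'; rewrite /=; lia.
Qed.

Lemma ham (S : {set T}) (x0 : T) : ~ has_cycle e S -> (0 < #|S|)%N ->
  (forall a b, a \in S -> b \in S -> connect (Defs.induced e S) a b) ->
  (forall v, v \in S -> (nb S v <= 2)%N) ->
  exists s, [/\ spath S s, (forall y, y \in S -> y \in s) &
    forall i j, (i < size s)%N -> (j < size s)%N -> e (nth x0 s i) (nth x0 s j) ->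
       (i.+1 == j) || (j.+1 == i)].
Proof.
move=> nc /card_gt0P [v0 v0S] conn deg2.
have [s [sp s0 mx]] := @maxpath S v0 v0S.
have sp' := sp; case/and3P: sp' => us as_ ss.
have cl : forall u, u \in s -> forall w, w \in S -> e u w -> w \in s.
  move=> u uis w wS euw; apply/negPn/negP => wn.
  have hi : (index u s < size s)%N by rewrite index_mem.
  have nu := nth_index x0 uis.
  have uS : u \in S by apply: (allP as_).
  case: (boolP (index u s == 0%N)) => [/eqP h0|h0].
    by move: wn; rewrite (@maxpath_head S s x0 sp s0 mx w wS) // -h0 nu.
  case: (boolP (index u s == (size s).-1)) => [/eqP h1|h1].
    by move: wn; rewrite (@maxpath_last S s x0 sp s0 mx w wS) // -h1 nu.
  set i := index u s in hi nu h0 h1.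
  have {h0}h0 : (0 < i)%N by rewrite lt0n.
  have {h1}h1 : (i.+1 < size s)%N.
    by move/eqP: h1 => h1; lia.
  clearbody i.
  have hi1 : (i.-1 < size s)%N by lia.
  have hi2 : (i.-1 < i.+1)%N by lia.
  set a := nth x0 s i.-1; set b := nth x0 s i.+1.
  have eua : e u a.
    rewrite esym /a -nu; have := sortedP x0 ss i.-1; rewrite prednK; last by lia.
    by apply; lia.
  have eub : e u b by rewrite /b -nu; apply: (sortedP x0 ss); lia.
  have ab : a != b.
    by rewrite /a /b nth_uniq // neq_ltn hi2.
  have ais : a \in s by rewrite mem_nth //; lia.
  have bis : b \in s by rewrite mem_nth //; lia.
  have aS : a \in S by apply: (allP as_).
  have bS : b \in S by apply: (allP as_).
  have h3 := deg2 u uS; rewrite nb_card (cardsD1 w) inE wS euw /= add1n in h3.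
  have h4 : (1 < #|[set y in S | e u y] :\ w|)%N.
    apply/card_gt1P; exists a, b; split => //.
      rewrite !inE aS eua !andbT; apply/negP => /eqP hh; move: wn; by rewrite -hh ais.
    rewrite !inE bS eub !andbT; apply/negP => /eqP hh; move: wn; by rewrite -hh bis.
  by move: h3; rewrite ltnS leqNgt h4.
exists s; split => //.
  move=> y yS.
  have h0S : nth x0 s 0 \in S by apply: (allP as_); rewrite mem_nth.
  have cl' : fingraph.closed (Defs.induced e S) [pred z | z \in s].
    move=> a b /= /and3P [aS bS eab].
    apply/idP/idP => h; first exact: cl eab.
    by apply: (cl b) => //; rewrite esym.
  by rewrite -(closed_connect cl' (conn _ _ h0S yS)) /= mem_nth.
move=> i j hi hj eij.
case: (boolP (i.+1 < j)%N) => h1.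
  by move: (@chord S s x0 i j us as_ ss nc h1 hj); rewrite eij.
case: (boolP (j.+1 < i)%N) => h2.
  by move: (@chord S s x0 j i us as_ ss nc h2 hi); rewrite esym eij.
have hij : i != j by apply/eqP => h; move: eij; rewrite h eirr.
apply/orP; have : (i.+1 = j) \/ (j.+1 = i) by move: hij; lia.
by case => ->; rewrite eqxx; auto.
Qed.

Lemma deg_nb v : deg e v = nb fullT v.
Proof. by rewrite nb_card /deg; apply: eq_card => y; rewrite !inE. Qed.

Lemma nb_splitV (V : {set T}) v : nb fullT v = (nb V v + nb (~: V) v)%N.
Proof.
rewrite /nb (bigID (mem V)) /=; congr addn; apply: eq_bigl => y; by rewrite !inE.
Qed.

Lemma deg_pos v : connected_graph e -> (1 < #|T|)%N -> (0 < deg e v)%N.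
Proof.
move=> conn /card_gt1P [a [b [_ _ ab]]].
have [y yv] : exists y, y != v.
  case: (eqVneq a v) => [av|]; last by exists a.
  by exists b; rewrite -av eq_sym.
have := conn v y; case/connectP => p pp yl.
case: p pp yl => [/= _ yl|z p /= /andP[evz _] _]; first by rewrite yl eqxx in yv.
by apply/card_gt0P; exists z; rewrite inE.
Qed.

Lemma nb_C1 v : nb fullT v = nb [set~ v] v.
Proof.
have hv : v \in fullT by rewrite inE.
rewrite /nb (big_setD1 v hv) /= eirr add0n.
by apply: eq_bigl => y; rewrite !inE andbT.
Qed.

Lemma m_ge2 (V : {set T}) :
  (forall W : {set T}, #|W| = #|V|.-1 -> ~ tree_after_removal e W) ->
  (0 < #|~: V|)%N -> (forall v, 0 < deg e v)%N -> (2 <= #|~: V|)%N.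
Proof.
move=> minV S0 dpos; rewrite ltn_neqAle S0 andbT.
apply/negP => /eqP h1; have /cards1P [u Su] : #|~: V| == 1%N by rewrite -h1.
have := dpos u; rewrite /deg => /card_gt0P [x]; rewrite inE => eux.
have uV : u \notin V.
  have : u \in ~: V by rewrite Su set11.
  by rewrite inE.
have xV : x \in V.
  apply/negPn/negP => xV.
  have : x \in ~: V by rewrite inE.
  by rewrite Su inE => /eqP xu; move: eux; rewrite xu eirr.
have memW : forall a, a \in ~: (V :\ x) -> (a == u) || (a == x).
  move=> a; rewrite !inE negb_and negbK; case/orP => [/eqP->|aV].
    by rewrite eqxx orbT.
  have : a \in ~: V by rewrite inE.
  by rewrite Su inE => ->.
have uW : u \in ~: (V :\ x) by rewrite !inE negb_and uV orbT.
have xW : x \in ~: (V :\ x) by rewrite !inE eqxx.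
apply: (minV (V :\ x)); first by rewrite (cardsD1 x V) xV.
split.
- by apply/card_gt0P; exists u.
- move=> a b /memW /orP [] /eqP -> /memW /orP [] /eqP ->; try exact: connect0.
    by apply: connect1; rewrite /Defs.induced /= uW xW.
  by apply: connect1; rewrite /Defs.induced /= uW xW esym.
- case=> c [ac uc sc _].
  have : (size c <= size [:: u; x])%N.
    apply: uniq_leq_size uc _ => y /(allP ac) /memW.
    by rewrite !inE.
  by rewrite /=; lia.
Qed.

End Graph.

Section Iso.
Variables n k : nat.
Variable G : rel 'I_n.
Hypothesis esym : symmetric G.
Hypothesis eirr : irreflexive G.

Lemma build_iso (V : {set 'I_n}) (s : seq 'I_n) (x0 : 'I_n) :
  #|V| = k -> uniq s -> size s = (n - k)%N ->
  (forall y, y \notin V -> y \in s) -> (forall y, y \in s -> y \notin V) ->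
  (forall v y, v \in V -> y != v -> G v y) ->
  (forall i j, (i < size s)%N -> (j < size s)%N ->
      G (nth x0 s i) (nth x0 s j) = (i.+1 == j) || (j.+1 == i)) ->
  (0 < k)%N -> (0 < n - k)%N ->
  isomorphic G (graph_join (complete_graph k) (path_graph (n - k))).
Proof.
move=> cV us ss sV sV' full edge k0 m0.
pose d1 : 'I_k := Ordinal k0.
pose d2 : 'I_(n - k) := Ordinal m0.
pose phi x := if x \in V then inl (insubd d1 (index x (enum V)))
              else inr (insubd d2 (index x s)) : ('I_k + 'I_(n - k))%type.
have hV x : x \in V -> (index x (enum V) < k)%N.
  by move=> xV; rewrite -cV cardE index_mem mem_enum.
have hs x : x \notin V -> (index x s < n - k)%N.
  by move=> xV; rewrite -ss index_mem sV.
have phiinj : injective phi.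
  move=> x y; rewrite /phi.
  case: ifP => xV; case: ifP => yV // [].
  - have ix := hV x xV; have iy := hV y yV.
    move/(congr1 val); rewrite !insubdK // => h.
    have xe : x \in enum V by rewrite mem_enum.
    have ye : y \in enum V by rewrite mem_enum.
    by rewrite -(nth_index x xe) h nth_index.
  - have ix := hs x (negbT xV); have iy := hs y (negbT yV).
    move/(congr1 val); rewrite !insubdK // => h.
    by rewrite -(nth_index x (sV x (negbT xV))) h nth_index // sV // yV.
exists phi; split.
  have := inj_card_bij phiinj; apply; rewrite card_sum !card_ord; lia.
move=> x y.
have hxy : (phi x == phi y) = (x == y) := inj_eq phiinj x y.
move: hxy; rewrite /phi.
case: ifP => xV; case: ifP => yV /= hxy.
- rewrite /complete_graph; move: hxy; rewrite inj_eq; last by move=> a b [].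
  move=> ->; case: (eqVneq x y) => [->|xy]; first by rewrite eirr.
  by apply: full => //; rewrite eq_sym.
- apply: full => //; apply/eqP => h; by rewrite h xV in yV.
- rewrite esym; apply: full => //; apply/eqP => h; by rewrite h yV in xV.
- have ix := hs x (negbT xV); have iy := hs y (negbT yV).
  rewrite /path_graph !insubdK //.
  rewrite -{1}(nth_index x0 (sV x (negbT xV))) -{1}(nth_index x0 (sV y (negbT yV))).
  by rewrite edge // index_mem sV ?xV ?yV.
Qed.
End Iso.


Lemma sumb_card (I : finType) (P : pred I) : (\sum_i (P i : nat))%N = #|P|.
Proof. rewrite -sum1_card [RHS]big_mkcond /=; apply: eq_bigr => i _; rewrite unfold_in; by case: (P i). Qed.

Lemma sum_eq1 a m : (\sum_(0 <= j < m) (a == j : nat))%N = (a < m).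
Proof.
elim: m => [|m IH]; first by rewrite big_geq.
rewrite big_nat_recr //= IH; lia.
Qed.

Lemma sum_eq2 b m : (\sum_(0 <= j < m) (j.+1 == b : nat))%N = (0 < b) && (b <= m).
Proof.
elim: m => [|m IH]; first by rewrite big_geq //; case: b.
rewrite big_nat_recr //= IH; lia.
Qed.

Lemma pdeg m (j : 'I_m) :
  (\sum_(j' : 'I_m) (path_graph m j j' : nat))%N = ((j.+1 < m) + (0 < j))%N.
Proof.
rewrite /path_graph.
rewrite (eq_bigr (fun j' : 'I_m => (j.+1 == j' : nat) + (j'.+1 == j))%N); last first.
  move=> j' _; case: (eqVneq (j.+1) (nat_of_ord j')) => h1; case: (eqVneq (j'.+1) (nat_of_ord j)) => h2 //=.
  by move: h1 h2; lia.
rewrite big_split /=.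
rewrite -(big_mkord xpredT (fun j' => (j.+1 == j' : nat))) sum_eq1.
rewrite -(big_mkord xpredT (fun j' => (j'.+1 == j : nat))) sum_eq2.
by rewrite (ltnW (ltn_ord j)) andbT.
Qed.

Section Conv.
Local Open Scope ring_scope.
Variable R : realType.
Variable alpha : R.
Local Notation F := (f R alpha).

Lemma path_sum k m : (2 <= m)%N ->
  \sum_(j : 'I_m) F (k + ((j.+1 < m) + (0 < j)))%N =
  2%:R * F (k + 1) + (m - 2)%N%:R * F (k + 2).
Proof.
case: m => [|[|m]] // _.
rewrite -(big_mkord xpredT (fun j => F (k + ((j.+1 < m.+2) + (0 < j)))%N)).
rewrite big_nat_recl // big_nat_recr //=.
rewrite (eq_big_nat _ _ (F2 := fun _ => F (k + 2))); last first.
  move=> i /andP[_ hi]; congr F; rewrite !ltnS; lia.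
rewrite sumr_const_nat subn0 !ltnS ltnn /= addn0 addn1.
rewrite [(m.+2 - 2)%N]subSS subSS subn0 -mulr_natl; ring.
Qed.
End Conv.

Lemma sum_eq_le (R : realType) (I : finType) (P : pred I) (a b : I -> R) :
  (forall i, P i -> (a i <= b i)%R) ->
  (\sum_(i | P i) a i = \sum_(i | P i) b i)%R -> forall i, P i -> a i = b i.
Proof.
move=> hab hs i Pi; apply/eqP; rewrite eq_sym -subr_eq0; apply/eqP.
apply: (psumr_eq0P (P := P) (F := fun i => b i - a i)%R) => //.
  by move=> j Pj; rewrite subr_ge0 hab.
by rewrite sumrB hs subrr.
Qed.

Section Main.
Local Open Scope ring_scope.
Variable R : realType.
Variable alpha : R.
Hypothesis an : alpha < 0.
Variables n k : nat.
Variable G : rel 'I_n.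
Hypothesis k1 : (1 <= k)%N.
Hypothesis n3 : (3 <= n)%N.
Hypothesis esym : symmetric G.
Hypothesis eirr : irreflexive G.
Hypothesis conn : connected_graph G.
Local Notation F := (f R alpha).
Local Notation nbG := (nb _ G).

Definition bnd := k%:R * F (n - 1) + 2%:R * F (k + 1) + (n - k - 2)%N%:R * F (k + 2).

Lemma dpos v : (0 < deg G v)%N.
Proof. apply: deg_pos conn _; rewrite card_ord; lia. Qed.

Lemma conv : (2 <= n - k)%N ->
  isomorphic G (graph_join (complete_graph k) (path_graph (n - k))) ->
  randic0 G alpha = bnd.
Proof.
move=> m2 [phi [bij hedge]].
set H := graph_join _ _ in hedge *.
have dH x : deg G x = deg H (phi x).
  rewrite !deg_nb /nb [RHS](reindex phi) /=; last exact: onW_bij.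
  apply: eq_big => y; first by rewrite !inE.
  by move=> _; rewrite hedge.
have -> : randic0 G alpha = \sum_z F (deg H z).
  rewrite /randic0 [RHS](reindex phi) /=; last exact: onW_bij.
  by apply: eq_bigr => x _; rewrite dH.
rewrite big_sumType /=.
have dl i : deg H (inl i) = (n - 1)%N.
  rewrite /deg -sumb_card big_sumType /=.
  rewrite sumb_card (eq_card (B := predC1 i)); last by move=> j; rewrite !inE eq_sym.
  rewrite cardC1 card_ord.
  have -> : (\sum_(j : 'I_(n - k)) (H (inl i) (inr j) : nat))%N = (n - k)%N.
    by rewrite -[RHS](card_ord (n - k)) -sum1_card.
  lia.
have dr j : deg H (inr j) = (k + ((j.+1 < n - k) + (0 < j)))%N.
  rewrite /deg -sumb_card big_sumType /= pdeg.
  have -> : (\sum_(i : 'I_k) (H (inr j) (inl i) : nat))%N = k.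
    by rewrite -[RHS](card_ord k) -sum1_card.
  by [].
under eq_bigr => i _ do rewrite dl.
rewrite (eq_bigr (fun j : 'I_(n - k) => F (k + ((j.+1 < n - k) + (0 < j)))%N)); last by move=> j _; rewrite dr.
rewrite sumr_const card_ord path_sum // /bnd.
by rewrite -[F (n - 1) *+ k]mulr_natl addrA.
Qed.

Lemma core : gen_quasi_tree G k ->
  bnd <= randic0 G alpha /\
  (randic0 G alpha = bnd <->
     isomorphic G (graph_join (complete_graph k) (path_graph (n - k)))).
Proof.
case=> _ [[V [cV tV]] minV].
case: tV => S0 Sconn Snc.
set S := ~: V in S0 Sconn Snc.
have cS : #|S| = (n - k)%N by have := cardsC V; rewrite card_ord cV /S; lia.
have m2 : (2 <= n - k)%N.
  rewrite -cS; apply: (@m_ge2 _ G esym eirr V) => //; last exact: dpos.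
  by rewrite cV.
have kn : (k <= n)%N by lia.
pose s_ := F (k + 2) - F (k + 1).
have s0 : s_ <= 0 by rewrite subr_le0; apply: f_le => //; lia.
pose d v := nbG S v.
have hdeg v : deg G v = (nbG V v + d v)%N by rewrite deg_nb (@nb_splitV _ G V).
have hq v : (deg G v <= n - 1)%N.
  rewrite deg_nb (@nb_C1 _ G eirr); have := @nb_le _ G [set~ v] v.
  by rewrite cardsC1 card_ord subn1.
have ht v : (deg G v <= k + d v)%N by rewrite hdeg -cV leq_add2r nb_le.
have RS : randic0 G alpha = \sum_(v in V) F (deg G v) + \sum_(v in S) F (deg G v).
  by rewrite /randic0 (bigID (mem V)) /=; congr (_ + _); apply: eq_bigl => v; rewrite !inE.
have XE : k%:R * F (n - 1) = \sum_(v in V) F (n - 1) by rewrite sumr_const cV mulr_natl.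
have LA : \sum_(v in V) F (n - 1) <= \sum_(v in V) F (deg G v).
  by apply: ler_sum => v _; exact: (@f_le R alpha an _ _ (dpos v) (hq v)).
have LYv v : v \in S -> F (k + 2) + ((d v)%:R - 2) * s_ <= F (deg G v).
  move=> _; apply: le_trans (proj1 (@lb R alpha an k k1 (d v))) _.
  exact: (@f_le R alpha an _ _ (dpos v) (ht v)).
have LY : \sum_(v in S) (F (k + 2) + ((d v)%:R - 2) * s_) <= \sum_(v in S) F (deg G v).
  by apply: ler_sum => v vS; apply: LYv.
have sumd : (\sum_(v in S) d v <= 2 * (#|S|.-1))%N := @forest _ G esym eirr S Snc.
have LB : 2%:R * F (k + 1) + (n - k - 2)%N%:R * F (k + 2) <=
          \sum_(v in S) (F (k + 2) + ((d v)%:R - 2) * s_).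
  rewrite big_split /= sumr_const -mulr_suml sumrB -natr_sum sumr_const.
  set D := (\sum_(v in S) d v)%N in sumd *.
  have hD : (D%:R : R) <= 2 * ((n - k)%N%:R - 1).
    have : (D <= 2 * ((n - k) - 1))%N by move: sumd; rewrite cS; lia.
    rewrite -(ler_nat R) natrM natrB; last by lia.
    exact: id.
  rewrite cS natrB // -[F (k + 2) *+ _]mulr_natl -[2 *+ _]mulr_natl.
  set M := (n - k)%N%:R in hD *.
  have hp : 0 <= (2 * (M - 1) - D%:R) * (- s_) by apply: mulr_ge0; lra.
  rewrite -subr_ge0.
  have -> : M * F (k + 2) + (D%:R - M * 2) * s_ - (2 * F (k + 1) + (M - 2) * F (k + 2))
      = (2 * (M - 1) - D%:R) * (- s_) by rewrite /s_; ring.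
  exact: hp.
have lower : bnd <= randic0 G alpha.
  by rewrite RS /bnd XE -addrA; apply: lerD => //; apply: le_trans LB LY.
split => //; split; last exact: conv m2.
move=> heq.
have eA : \sum_(v in V) F (n - 1) = \sum_(v in V) F (deg G v).
  by move: heq; rewrite RS /bnd XE; lra.
have eY : \sum_(v in S) (F (k + 2) + ((d v)%:R - 2) * s_) = \sum_(v in S) F (deg G v).
  by move: heq; rewrite RS /bnd XE; lra.
have fullV v y : v \in V -> y != v -> G v y.
  move=> vV yv.
  have e1 := @sum_eq_le R _ _ _ _ (fun v _ => @f_le R alpha an _ _ (dpos v) (hq v)) eA v vV.
  have dv : deg G v = (n - 1)%N.
    apply/eqP; rewrite eqn_leq hq /= leqNgt; apply/negP => h.
    by move: (@f_lt R alpha an _ _ (dpos v) h); rewrite e1 ltxx.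
  have hc : #|[set~ v]| = (n - 1)%N by rewrite cardsC1 card_ord subn1.
  move: dv; rewrite deg_nb (@nb_C1 _ G eirr) -hc => /(@nb_full _ G); apply.
  by rewrite !inE.
have deg2 v : v \in S -> (nbG S v <= 2)%N.
  move=> vS; have e1 := @sum_eq_le R _ _ _ _ LYv eY v vS.
  rewrite leqNgt; apply/negP => h.
  have h1 : d v != 1%N by rewrite /d; apply/eqP => h'; rewrite h' in h.
  have h2 : d v != 2%N by rewrite /d; apply/eqP => h'; rewrite h' in h.
  have := proj2 (@lb R alpha an k k1 (d v)) h1 h2; rewrite e1 => h3.
  have := @f_le R alpha an _ _ (dpos v) (ht v); rewrite /s_ in h3; lra.
have [x0 x0S] : exists x0, x0 \in S by apply/card_gt0P.
have [s [/and3P [us as_ ss] cov edg]] := @ham _ G esym eirr S x0 Snc S0 Sconn deg2.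
have ss' : size s = (n - k)%N.
  rewrite -(card_uniqP us) -cS; apply: eq_card => y; apply/idP/idP.
    by move=> /(allP as_).
  exact: cov.
apply: (@build_iso n k G esym eirr V s x0) => //; last by lia.
- by move=> y yV; apply: cov; rewrite inE.
- by move=> y /(allP as_); rewrite /= inE.
- move=> i j hi hj; apply/idP/idP; first exact: edg.
  case/orP => /eqP hh; first by rewrite -hh; apply: (sortedP x0 ss); rewrite hh.
  by rewrite esym -hh; apply: (sortedP x0 ss); rewrite hh.
Qed.

End Main.


Theorem mainTheorem1 (R : realType) (k n : nat) (alpha : R)
    (G : rel 'I_n) :
  (1 <= k)%N -> (3 <= n)%N -> (alpha < 0)%R ->
  simple_graph G -> gen_quasi_tree G k ->
  let bound : R :=
    (k%:R * ((n - 1)%N%:R `^ alpha) + 2%:R * ((k + 1)%N%:R `^ alpha)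
     + (n - k - 2)%N%:R * ((k + 2)%N%:R `^ alpha))%R in
  (bound <= randic0 G alpha)%R /\
  (randic0 G alpha = bound <->
     isomorphic G (graph_join (complete_graph k) (path_graph (n - k)))).
Proof.
move=> k1 n3 an [esym eirr] gq bound.
exact: (@core R alpha an n k G k1 n3 esym eirr gq.1 gq).
Qed.
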